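(* In the model described in the context, define for $x\in(0,\tfrac12)$ $$\alpha_x^*=\frac{\kappa_x[s^*(x)]}{\kappa_x[s^*(x)]+1},$$ and for $x\in(\tfrac12,1)$ $$\alpha_x^*=\frac{\kappa_x[s^*(x)]+1}{\kappa_x[s^*(x)]},$$ where $\kappa_x(s)=\dfrac{xF_0(s)-(1-x)F_1(s)}{1-2x}$. Then $\alpha_x^*$ is increasing in $x$ on $(0,\tfrac12)$ and decreasing in $x$ on $(\tfrac12,1)$.
   Context: Model. In state $\theta\in\{0,1\}$ a voter's informative signal $s\in\mathbb{R}$ is drawn from a cdf $F_\theta$ with density $f_\theta$ having full support on $\mathbb{R}$, where $f_0(0)=f_1(0)$ and the likelihood ratio $m(s)=f_1(s)/f_0(s)$ is strictly increasing in $s$. For $x\in(0,1)$ let $s^*(x)=m^{-1}\!\left(\frac{x}{1-x}\right)$. (In the paper's model, $\alpha_x^*$ is the sender-optimal mass of trolls targeting voters of type $x$: the probability that such a voter observes a message from a troll farm instead of her informative signal.) *)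

(* Defs.v *)
From HB Require Import structures.
From mathcomp Require Import all_boot all_order all_algebra.
From mathcomp Require Import all_classical all_reals all_analysis.
Set Implicit Arguments. Unset Strict Implicit. Unset Printing Implicit Defensive.
Import Order.TTheory GRing.Theory Num.Theory.
Import numFieldNormedType.Exports.
Local Open Scope classical_set_scope.
Local Open Scope ring_scope.

(* A probability density on R: measurable, integrates to 1 w.r.t. Lebesgue
   measure; "full support on R" is read as strict positivity everywhere. *)
Definition full_support_density (R : realType) (f : R -> R) : Prop :=
  [/\ measurable_fun setT f,
      (forall s, 0 < f s) &
      (\int[@lebesgue_measure R]_(t in setT) (f t)%:E = 1)%E].

Definition dens_cdf (R : realType) (f : R -> R) (s : R) : R :=
  fine (\int[@lebesgue_measure R]_(t in `]-oo, s]) (f t)%:E).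

Definition kappa (R : realType) (F0 F1 : R -> R) (x s : R) : R :=
  (x * F0 s - (1 - x) * F1 s) / (1 - 2 * x).

Definition alpha_low (R : realType) (F0 F1 sstar : R -> R) (x : R) : R :=
  kappa F0 F1 x (sstar x) / (kappa F0 F1 x (sstar x) + 1).

Definition alpha_high (R : realType) (F0 F1 sstar : R -> R) (x : R) : R :=
  (kappa F0 F1 x (sstar x) + 1) / kappa F0 F1 x (sstar x).

(* Main.v *)
Require Import Defs.
From HB Require Import structures.
From mathcomp Require Import all_boot all_order all_algebra.
From mathcomp Require Import all_classical all_reals all_analysis.
From mathcomp Require Import measurable_realfun.
From mathcomp Require Import ring lra.
Import Order.TTheory GRing.Theory Num.Theory.
Import numFieldNormedType.Exports.
Local Open Scope classical_set_scope.
Local Open Scope ring_scope.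

Section S.
Variable R : realType.
Local Notation mu := (@lebesgue_measure R).
Variable f : R -> R.
Hypothesis hf : full_support_density f.

Lemma mfE (D : set R) : measurable_fun D (fun x => (f x)%:E).
Proof.
case: hf => mf _ _; apply/measurable_EFinP.
apply: measurable_funS mf => //.
Qed.

Lemma If_ge0 (D : set R) : (0 <= \int[mu]_(x in D) (f x)%:E)%E.
Proof. apply: integral_ge0 => x _; rewrite lee_fin; case: hf => _ h _; exact/ltW. Qed.

Lemma If_le1 (D : set R) : measurable D -> (\int[mu]_(x in D) (f x)%:E <= 1)%E.
Proof.
move=> mD; case: hf => mf hp <-.
apply: ge0_subset_integral => //; first exact: mfE.
by move=> x _; rewrite lee_fin ltW.
Qed.

Lemma If_gt0 (a b : R) : a < b -> (0 < \int[mu]_(x in `]a, b[) (f x)%:E)%E.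
Proof.
move=> ab; rewrite lt0e If_ge0 andbT; apply/negP => /eqP H.
have H' : (\int[mu]_(x in `]a, b[) `|(f x)%:E| = 0)%E.
  rewrite -H; apply: eq_integral => x _; rewrite gee0_abs // lee_fin; case: hf => _ h _; exact/ltW.
have [N [mN N0 sub]] := (ae_eq_integral_abs mu (measurable_itv `]a, b[) (mfE _)).1 H'.
have : (mu `]a, b[ <= mu N)%E.
  apply: le_measure; rewrite ?inE //.
  move=> x abx; apply: sub => /= /(_ abx) => /eqP.
  by rewrite /cst eqe; case: hf => _ h _; rewrite gt_eqF.
rewrite N0 lebesgue_measure_itv /= lte_fin ab /=.
by rewrite -EFinD lee_fin leNgt subr_gt0 ab.
Qed.
End S.
Arguments mfE {R f} hf D.
Arguments If_ge0 {R f} hf D.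
Arguments If_le1 {R f} hf {D} mD.
Arguments If_gt0 {R f} hf {a b} ab.
Unset Strict Implicit.
Set Implicit Arguments.
Section S2.
Variable R : realType.
Local Notation mu := (@lebesgue_measure R).

Definition P (f : R -> R) (A : set R) : R := fine (\int[mu]_(x in A) (f x)%:E)%E.

Variable f : R -> R.
Hypothesis hf : full_support_density f.

Lemma PE (A : set R) : measurable A -> (\int[mu]_(x in A) (f x)%:E = (P f A)%:E)%E.
Proof.
move=> mA; rewrite /P fineK // ge0_fin_numE ?(If_ge0 hf) //.
by apply: le_lt_trans; [exact: (If_le1 hf mA)|rewrite ltey].
Qed.

Lemma P_ge0 (A : set R) : measurable A -> 0 <= P f A.
Proof. by move=> mA; rewrite -lee_fin -PE // (If_ge0 hf). Qed.

Lemma P_T : P f setT = 1.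
Proof. by case: hf => _ _ H; rewrite /P H. Qed.

Lemma P_add (A B : set R) : measurable A -> measurable B -> [disjoint A & B] ->
  P f (A `|` B) = P f A + P f B.
Proof.
move=> mA mB dAB; apply/eqP; rewrite -(@eqe R) EFinD -!PE //; last exact: measurableU.
rewrite ge0_integral_setU //; first exact: (mfE hf (A `|` B)).
by move=> x _; rewrite lee_fin; case: hf => _ h _; exact/ltW.
Qed.

Lemma P_gt0 (A : set R) (a b : R) : measurable A -> a < b -> `]a, b[ `<=` A -> 0 < P f A.
Proof.
move=> mA ab sub; rewrite -lte_fin -PE //.
apply: (lt_le_trans (If_gt0 hf ab)); apply: ge0_subset_integral => //; first exact: (mfE hf A).
by move=> x _; rewrite lee_fin; case: hf => _ h _; exact/ltW.
Qed.
End S2.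

Lemma P_cmp (R : realType) (f g : R -> R) (c : R) (A : set R) :
  full_support_density f -> full_support_density g -> measurable A -> 0 <= c ->
  (forall t, A t -> g t <= c * f t) -> P g A <= c * P f A.
Proof.
move=> hf hg mA c0 H; rewrite -lee_fin EFinM -!PE //.
rewrite -ge0_integralZl_EFin //.
apply: ge0_le_integral.
- exact: mA.
- by move=> x _; rewrite lee_fin; case: hg => _ h _; exact/ltW.
- exact: (mfE hg A).
- under eq_fun do rewrite -EFinM.
  apply/measurable_EFinP; apply: measurable_funM => //.
  by case: hf => mf _ _; apply: measurable_funS mf.
- by move=> x Ax; rewrite -EFinM lee_fin H.
- by move=> x _; rewrite lee_fin; case: hf => _ h _; exact/ltW.
- exact: (mfE hf A).
Qed.

Section Itv.
Variable R : realType.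
Lemma split_left (a b : R) : a <= b ->
  [set` `]-oo, b]] = [set` `]-oo, a]] `|` [set` `]a, b]].
Proof.
move=> ab; apply/seteqP; split => x /=; rewrite !in_itv /=.
- by move=> xb; case: (leP x a) => xa; [left|right; rewrite xb].
- by case=> [xa|/andP[_ ->]] //; exact: le_trans ab.
Qed.
Lemma split_right (a b : R) : a <= b ->
  [set` `]a, +oo[] = [set` `]a, b]] `|` [set` `]b, +oo[].
Proof.
move=> ab; apply/seteqP; split => x /=; rewrite !in_itv /= ?andbT.
- by move=> ax; case: (leP x b) => xb; [left; rewrite ax|right].
- by case=> [/andP[-> _]|bx] //; exact: le_lt_trans bx.
Qed.
Lemma split_T (a : R) : [set: R] = [set` `]-oo, a]] `|` [set` `]a, +oo[].
Proof.
rewrite eqEsubset; split => x //= _; rewrite !in_itv /= ?andbT.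
by case: (leP x a) => xa; [left|right].
Qed.
Lemma disj1 (a b : R) : [disjoint [set` `]-oo, a]] & [set` `]a, b]]].
Proof.
apply/disj_setPS => x [] /=; rewrite !in_itv /= => xa /andP[ax _].
by move: (lt_le_trans ax xa); rewrite ltxx.
Qed.
Lemma disj2 (a : R) : [disjoint [set` `]-oo, a]] & [set` `]a, +oo[]].
Proof.
apply/disj_setPS => x [] /=; rewrite !in_itv /= ?andbT => xa ax.
by move: (lt_le_trans ax xa); rewrite ltxx.
Qed.
Lemma disj3 (a b : R) : [disjoint [set` `]a, b]] & [set` `]b, +oo[]].
Proof.
apply/disj_setPS => x [] /=; rewrite !in_itv /= ?andbT => /andP[_ xb] bx.
by move: (lt_le_trans bx xb); rewrite ltxx.
Qed.
End Itv.

Section Main.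
Variable R : realType.
Variables f0 f1 sstar : R -> R.
Hypothesis h0 : full_support_density f0.
Hypothesis h1 : full_support_density f1.
Hypothesis h00 : f0 0 = f1 0.
Hypothesis hm : forall a b : R, a < b -> f1 a / f0 a < f1 b / f0 b.
Hypothesis hs : forall x : R, 0 < x < 1 -> f1 (sstar x) / f0 (sstar x) = x / (1 - x).

Let m t := f1 t / f0 t.
Let F0 := dens_cdf f0.
Let F1 := dens_cdf f1.

Lemma f0_gt0 t : 0 < f0 t. Proof. by case: h0. Qed.
Lemma f1_gt0 t : 0 < f1 t. Proof. by case: h1. Qed.
Lemma m_gt0 t : 0 < m t. Proof. by rewrite /m divr_gt0 // ?f0_gt0 ?f1_gt0. Qed.
Lemma m_le t u : t <= u -> m t <= m u.
Proof. by rewrite le_eqVlt => /orP[/eqP->//|/hm/ltW]. Qed.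
Lemma m0 : m 0 = 1.
Proof. by rewrite /m h00 divff // gt_eqF // -h00 f0_gt0. Qed.
Lemma f1E t : f1 t = m t * f0 t.
Proof. by rewrite /m divfK // gt_eqF // f0_gt0. Qed.

Lemma cmp_le t u : t <= u -> f1 t <= m u * f0 t.
Proof. by move=> tu; rewrite f1E; apply: ler_wpM2r; [exact/ltW/f0_gt0|exact: m_le]. Qed.
Lemma cmp_ge t u : u <= t -> f0 t <= (m u)^-1 * f1 t.
Proof.
move=> ut; rewrite f1E -(ler_pM2l (m_gt0 u)) mulrA mulfV ?mul1r; last by rewrite gt_eqF // m_gt0.
by apply: ler_wpM2r; [exact/ltW/f0_gt0|exact: m_le].
Qed.

Lemma FP (f : R -> R) (s : R) : dens_cdf f s = P f [set` `]-oo, s]]. Proof. by []. Qed.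

Lemma F0_gt0 s : 0 < F0 s.
Proof.
rewrite /F0 FP; apply: (P_gt0 h0 (a := s - 1) (b := s)) => //.
- by rewrite ltrBlDr ltrDl.
- by move=> x /=; rewrite !in_itv /= => /andP[_ /ltW].
Qed.

Lemma F1_lt1 s : F1 s < 1.
Proof.
have := P_T h1; rewrite (split_T s) P_add //; last exact: disj2.
have : 0 < P f1 [set` `]s, +oo[].
  apply: (P_gt0 h1 (a := s) (b := s + 1)) => //.
  - by rewrite ltrDl.
  - by move=> x /=; rewrite !in_itv /= andbT => /andP[].
rewrite /F1 FP; lra.
Qed.

Lemma Fmax x s : 0 < x < 1 ->
  x * F0 s - (1 - x) * F1 s <= x * F0 (sstar x) - (1 - x) * F1 (sstar x).
Proof.
move=> hx; have mc : m (sstar x) = x / (1 - x) by exact: hs.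
have x0 : 0 < x by case/andP: hx.
have x1 : 0 < 1 - x by rewrite subr_gt0; case/andP: hx.
case: (leP s (sstar x)) => sc.
- rewrite /F0 /F1 !FP (split_left sc) !P_add //; try exact: disj1.
  have H := P_cmp h0 h1 (c := m (sstar x)) (A := [set` `]s, sstar x]]) (measurable_itv _) (ltW (m_gt0 _)).
  have /H {}H : forall t, [set` `]s, sstar x]] t -> f1 t <= m (sstar x) * f0 t.
    by move=> t /=; rewrite in_itv /= => /andP[_ tc]; apply: cmp_le.
  rewrite mc in H.
  have H2 : (1 - x) * P f1 [set` `]s, sstar x]] <= x * P f0 [set` `]s, sstar x]].
    have := ler_wpM2l (ltW x1) H.
    have -> : (1 - x) * (x / (1 - x) * P f0 [set` `]s, sstar x]]) = x * P f0 [set` `]s, sstar x]] by field; rewrite gt_eqF.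
    by [].
  lra.
- have sc' := ltW sc.
  rewrite /F0 /F1 !FP (split_left sc') !P_add //; try exact: disj1.
  have ci : 0 <= (m (sstar x))^-1 by rewrite invr_ge0 ltW // m_gt0.
  have H := P_cmp h1 h0 (c := (m (sstar x))^-1) (A := [set` `]sstar x, s]]) (measurable_itv _) ci.
  have /H {}H : forall t, [set` `]sstar x, s]] t -> f0 t <= (m (sstar x))^-1 * f1 t.
    by move=> t /=; rewrite in_itv /= => /andP[/ltW ct _]; apply: cmp_ge.
  rewrite mc invf_div in H.
  have H2 : x * P f0 [set` `]sstar x, s]] <= (1 - x) * P f1 [set` `]sstar x, s]].
    have := ler_wpM2l (ltW x0) H.
    have -> : x * ((1 - x) / x * P f1 [set` `]sstar x, s]]) = (1 - x) * P f1 [set` `]sstar x, s]] by field; rewrite gt_eqF.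
    by [].
  lra.
Qed.

Lemma Fdom s : F1 s < F0 s.
Proof.
case: (leP s 0) => s0.
- have ss : s - 1 <= s by rewrite lerBlDr lerDl.
  rewrite /F0 /F1 !FP (split_left ss) !P_add //; try exact: disj1.
  have cA : 0 <= m (s - 1) by exact/ltW/m_gt0.
  have HA := P_cmp h0 h1 (c := m (s - 1)) (A := [set` `]-oo, s - 1]]) (measurable_itv _) cA.
  have /HA {}HA : forall t, [set` `]-oo, s - 1]] t -> f1 t <= m (s - 1) * f0 t.
    by move=> t /=; rewrite in_itv /=; apply: cmp_le.
  have HB := P_cmp h0 h1 (c := m 0) (A := [set` `]s - 1, s]]) (measurable_itv _) (ltW (m_gt0 _)).
  have /HB {}HB : forall t, [set` `]s - 1, s]] t -> f1 t <= m 0 * f0 t.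
    move=> t /=; rewrite in_itv /= => /andP[_ ts]; apply: cmp_le; exact: le_trans s0.
  rewrite m0 mul1r in HB.
  have mlt : m (s - 1) < 1 by rewrite -[X in _ < X]m0; apply: hm; lra.
  have pA : 0 < P f0 [set` `]-oo, s - 1]].
    apply: (P_gt0 h0 (a := s - 2) (b := s - 1)) => //.
    - lra.
    - by move=> x /=; rewrite !in_itv /= => /andP[_ /ltW].
  have : m (s - 1) * P f0 [set` `]-oo, s - 1]] < P f0 [set` `]-oo, s - 1]].
    by rewrite -[X in _ < X]mul1r ltr_pM2r.
  lra.
- have e1 (f : R -> R) (hf : full_support_density f) :
      dens_cdf f s = 1 - P f [set` `]s, +oo[].
    have := P_T hf; rewrite (split_T s) P_add //; last exact: disj2.
    rewrite FP; lra.
  have ss : s <= s + 1 by rewrite lerDl.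
  rewrite /F0 /F1 !e1 // (split_right ss) !P_add //; try exact: disj3.
  have cC : 0 <= (m (s + 1))^-1 by rewrite invr_ge0 ltW // m_gt0.
  have HC := P_cmp h1 h0 (c := (m (s + 1))^-1) (A := [set` `]s + 1, +oo[]) (measurable_itv _) cC.
  have /HC {}HC : forall t, [set` `]s + 1, +oo[] t -> f0 t <= (m (s + 1))^-1 * f1 t.
    by move=> t /=; rewrite in_itv /= andbT => /ltW; apply: cmp_ge.
  have cB : 0 <= (m 0)^-1 by rewrite invr_ge0 ltW // m_gt0.
  have HB := P_cmp h1 h0 (c := (m 0)^-1) (A := [set` `]s, s + 1]]) (measurable_itv _) cB.
  have /HB {}HB : forall t, [set` `]s, s + 1]] t -> f0 t <= (m 0)^-1 * f1 t.
    move=> t /=; rewrite in_itv /= => /andP[st _]; apply: cmp_ge; exact/ltW/(lt_trans s0).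
  rewrite m0 invr1 mul1r in HB.
  have mgt : m 0 < m (s + 1) by apply: hm; lra.
  rewrite m0 in mgt.
  have klt : (m (s + 1))^-1 < 1 by rewrite invf_lt1 // m_gt0.
  have pC : 0 < P f1 [set` `]s + 1, +oo[].
    apply: (P_gt0 h1 (a := s + 1) (b := s + 2)) => //.
    - lra.
    - by move=> x /=; rewrite !in_itv /= andbT => /andP[].
  have : (m (s + 1))^-1 * P f1 [set` `]s + 1, +oo[] < P f1 [set` `]s + 1, +oo[].
    by rewrite -[X in _ < X]mul1r ltr_pM2r.
  lra.
Qed.

Lemma kap_mono x y s : x < y -> 0 < (1 - 2 * x) * (1 - 2 * y) ->
  kappa F0 F1 x s < kappa F0 F1 y s.
Proof.
move=> xy D; have Fd := Fdom s.
have nx : 1 - 2 * x != 0 by apply/eqP => e; move: D; rewrite e mul0r ltxx.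
have ny : 1 - 2 * y != 0 by apply/eqP => e; move: D; rewrite e mulr0 ltxx.
rewrite -subr_gt0.
have -> : kappa F0 F1 y s - kappa F0 F1 x s = (y - x) * (F0 s - F1 s) / ((1 - 2 * x) * (1 - 2 * y)).
  by rewrite /kappa; field; rewrite nx ny.
by rewrite divr_gt0 // mulr_gt0 // subr_gt0.
Qed.

Lemma kap0 s : kappa F0 F1 0 s = - F1 s.
Proof. rewrite /kappa; have -> : (1 - 2 * 0 : R) = 1 by ring. by rewrite divr1; ring. Qed.
Lemma kap1 s : kappa F0 F1 1 s = - F0 s.
Proof.
rewrite /kappa; have -> : (1 - 2 * 1 : R) = -1 by ring.
by rewrite invrN1 mulrN1; ring.
Qed.

Lemma low x y : 0 < x -> x < y -> y < 1 / 2 ->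
  alpha_low F0 F1 sstar x < alpha_low F0 F1 sstar y.
Proof.
move=> x0 xy y2.
have hy : 0 < y < 1 by apply/andP; split; lra.
set kx := kappa F0 F1 x (sstar x); set ky := kappa F0 F1 y (sstar y).
have k1 : kx < kappa F0 F1 y (sstar x) by apply: kap_mono => //; apply: mulr_gt0; lra.
have k2 : kappa F0 F1 y (sstar x) <= ky.
  rewrite /ky /kappa; apply: ler_wpM2r; first by rewrite invr_ge0; lra.
  by have := Fmax (sstar x) hy; lra.
have k3 : -1 < kx.
  have := F1_lt1 (sstar x); have : kappa F0 F1 0 (sstar x) < kx.
    by apply: kap_mono => //; apply: mulr_gt0; lra.
  rewrite kap0; lra.
rewrite /alpha_low -/kx -/ky -subr_gt0.
have -> : ky / (ky + 1) - kx / (kx + 1) = (ky - kx) / ((kx + 1) * (ky + 1)).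
  by field; apply/andP; split; apply/eqP; lra.
by apply: divr_gt0; [lra|apply: mulr_gt0; lra].
Qed.

Lemma high x y : 1 / 2 < x -> x < y -> y < 1 ->
  alpha_high F0 F1 sstar y < alpha_high F0 F1 sstar x.
Proof.
move=> x2 xy y1.
have hx : 0 < x < 1 by apply/andP; split; lra.
set kx := kappa F0 F1 x (sstar x); set ky := kappa F0 F1 y (sstar y).
have k1 : kx <= kappa F0 F1 x (sstar y).
  rewrite /kx /kappa; apply: ler_wnM2r; first by rewrite invr_le0; lra.
  by have := Fmax (sstar y) hx; lra.
have k2 : kappa F0 F1 x (sstar y) < ky by apply: kap_mono => //; rewrite nmulr_rgt0; lra.
have k3 : ky < 0.
  have := F0_gt0 (sstar y); have : ky < kappa F0 F1 1 (sstar y).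
    by apply: kap_mono => //; rewrite nmulr_rgt0; lra.
  rewrite kap1; lra.
rewrite /alpha_high -/kx -/ky -subr_gt0.
have -> : (kx + 1) / kx - (ky + 1) / ky = (ky - kx) / (kx * ky).
  by field; apply/andP; split; apply/eqP; lra.
by apply: divr_gt0; [lra|rewrite nmulr_rgt0; lra].
Qed.
End Main.

Unset Implicit Arguments.
Set Strict Implicit.

Theorem corollary1 (R : realType) (f0 f1 sstar : R -> R) :
  full_support_density f0 ->
  full_support_density f1 ->
  f0 0 = f1 0 ->
  (forall a b : R, a < b -> f1 a / f0 a < f1 b / f0 b) ->
  (forall x : R, 0 < x < 1 -> f1 (sstar x) / f0 (sstar x) = x / (1 - x)) ->
  (forall x y : R, 0 < x -> x < y -> y < 1 / 2 ->
     alpha_low (dens_cdf f0) (dens_cdf f1) sstar x < alpha_low (dens_cdf f0) (dens_cdf f1) sstar y) /\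
  (forall x y : R, 1 / 2 < x -> x < y -> y < 1 ->
     alpha_high (dens_cdf f0) (dens_cdf f1) sstar y < alpha_high (dens_cdf f0) (dens_cdf f1) sstar x).
Proof.
move=> h0 h1 h00 hm hs; split => x y.
- exact: (low h0 h1 h00 hm hs).
- exact: (high h0 h1 h00 hm hs).
Qed.
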